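(* Let $S$ be a left handed skew lattice. Then $S$ satisfies the identities $x\wedge y\wedge((x\vee y)\wedge z)=x\wedge y\wedge z$ and $x\vee y\vee z=x\vee(y\wedge z)\vee y\vee z$. If moreover $S$ is strongly distributive or co-strongly distributive, then $S$ also satisfies $(x\wedge y)\vee((x\vee y)\wedge z)=(x\vee(y\wedge z))\wedge(y\vee z)$, and hence $S$ is a strong distributive solution of the Yang–Baxter equation.
   Context: A skew lattice is a set $S$ with two binary operations $\wedge,\vee$, each idempotent and associative, satisfying the absorption laws $x\wedge(x\vee y)=x=x\vee(x\wedge y)$ and $(x\wedge y)\vee y=y=(x\vee y)\wedge y$ for all $x,y\in S$. $S$ is left handed if $x\wedge y\wedge x=x\wedge y$ for all $x,y$ (equivalently $x\vee y\vee x=y\vee x$). $S$ is strongly distributive if it satisfies $(x\vee y)\wedge z=(x\wedge z)\vee(y\wedge z)$ and $x\wedge(y\vee z)=(x\wedge y)\vee(x\wedge z)$; it is co-strongly distributive if it satisfies $(x\wedge y)\vee z=(x\vee z)\wedge(y\vee z)$ and $x\vee(y\wedge z)=(x\vee y)\wedge(x\vee z)$. A skew lattice $S$ is a strong distributive solution if the map $r(x,y)=(x\wedge y,x\vee y)$ on $S\times S$ satisfies $(r\times\mathrm{id})\circ(\mathrm{id}\times r)\circ(r\times\mathrm{id})=(\mathrm{id}\times r)\circ(r\times\mathrm{id})\circ(\mathrm{id}\times r)$. *)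

(* Defs.v *)
Definition skew_lattice {S : Type} (meet join : S -> S -> S) : Prop :=
  (forall x, meet x x = x) /\ (forall x, join x x = x) /\
  (forall x y z, meet x (meet y z) = meet (meet x y) z) /\
  (forall x y z, join x (join y z) = join (join x y) z) /\
  (forall x y, meet x (join x y) = x) /\
  (forall x y, join x (meet x y) = x) /\
  (forall x y, join (meet x y) y = y) /\
  (forall x y, meet (join x y) y = y).

Definition left_handed {S : Type} (meet join : S -> S -> S) : Prop :=
  forall x y, meet (meet x y) x = meet x y.

Definition strongly_distributive {S : Type} (meet join : S -> S -> S) : Prop :=
  (forall x y z, meet (join x y) z = join (meet x z) (meet y z)) /\
  (forall x y z, meet x (join y z) = join (meet x y) (meet x z)).

Definition co_strongly_distributive {S : Type} (meet join : S -> S -> S) : Prop :=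
  (forall x y z, join (meet x y) z = meet (join x z) (join y z)) /\
  (forall x y z, join x (meet y z) = meet (join x y) (join x z)).

Definition sl_r {S : Type} (meet join : S -> S -> S) (p : S * S) : S * S :=
  (meet (fst p) (snd p), join (fst p) (snd p)).

Definition r12 {S : Type} (r : S * S -> S * S) (t : S * S * S) : S * S * S :=
  let '(a, b, c) := t in let '(a', b') := r (a, b) in (a', b', c).

Definition r23 {S : Type} (r : S * S -> S * S) (t : S * S * S) : S * S * S :=
  let '(a, b, c) := t in let '(b', c') := r (b, c) in (a, b', c').

Definition strong_distributive_solution {S : Type} (meet join : S -> S -> S) : Prop :=
  let r := sl_r meet join in
  forall t : S * S * S, r12 r (r23 r (r12 r t)) = r23 r (r12 r (r23 r t)).

(* Main.v *)
Require Import Defs.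
From Stdlib Require Import Setoid.

Theorem mainTheorem7 (S : Type) (meet join : S -> S -> S) :
  skew_lattice meet join -> left_handed meet join ->
  (forall x y z, meet (meet x y) (meet (join x y) z) = meet (meet x y) z) /\
  (forall x y z, join (join x y) z = join (join (join x (meet y z)) y) z) /\
  (strongly_distributive meet join \/ co_strongly_distributive meet join ->
     (forall x y z, join (meet x y) (meet (join x y) z)
                    = meet (join x (meet y z)) (join y z)) /\
     strong_distributive_solution meet join).
Proof.
  intros [mi [ji [ma [ja [ab1 [ab2 [ab3 ab4]]]]]]] lh.
  set (m := meet) in *. set (j := join) in *.
  assert (K1 : forall x y, m (m x y) (j x y) = m x y).
  { intros x y. rewrite <- (lh x y) at 1. rewrite <- ma, ab1. apply lh. }
  assert (JL : forall x y, j (j x y) x = j y x).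
  { intros x y.
    assert (H : m x (j y x) = x).
    { transitivity (m (m (j y x) x) (j y x)).
      - rewrite (ab4 y x). reflexivity.
      - rewrite lh. apply ab4. }
    rewrite <- ja. rewrite <- H at 1. rewrite ab3. reflexivity. }
  assert (K2 : forall y z, j (m y z) y = y).
  { intros y z. rewrite <- (lh y z) at 1. apply ab3. }
  assert (I1 : forall x y z, m (m x y) (m (j x y) z) = m (m x y) z).
  { intros x y z. rewrite ma, K1. reflexivity. }
  assert (I2 : forall x y z, j (j x y) z = j (j (j x (m y z)) y) z).
  { intros x y z. rewrite <- (ja x (m y z) y), K2. reflexivity. }
  assert (I3 : strongly_distributive meet join \/ co_strongly_distributive meet join ->
     forall x y z, join (meet x y) (meet (join x y) z)
                    = meet (join x (meet y z)) (join y z)).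
  { intros [[d1 d2] | [d1 d2]] x y z; fold m j in d1, d2 |- *.
    - rewrite d1, d1, ja, <- d2. rewrite K1. reflexivity.
    - rewrite d1, !d2, !ja, !ji, JL. rewrite ma, lh. reflexivity. }
  split; [exact I1|]. split; [exact I2|].
  intros HD. split; [exact (I3 HD)|].
  unfold strong_distributive_solution. intros [[a b] c].
  cbn. fold m j. rewrite I1, (I3 HD), ma, (I2 a b c), <- !ja. reflexivity.
Qed.
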